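(* Let $n\ge 3$ and let $T=(l_1,\dots,l_n)$, $l_1\le\cdots\le l_n$, be an impossibly burnable $n$-path forest of order $m^2$. If $B_m(l_i)\le 2$ for some $i$, then $l_1\le 12n-2\sqrt{30n-27}-8$. In particular, if $l_1=M_n$ then $B_m(l_i)\ge 3$ for every $i\in[n]$.
   Context: A path forest is a disjoint union of paths; an $n$-path forest is represented by the tuple $(l_1,\dots,l_n)$ of its path orders, with total order $\sum_i l_i=m^2$. For $m\in\mathbb{N}$ and an integer $1\le l\le m^2$, let $B_m(l)$ be the least positive integer $t$ with $t\equiv l\pmod 2$ such that $l\le 2mt-t^2$. An $n$-path forest of order $m^2$ is impossibly burnable if $\sum_{i=1}^n B_m(l_i)>m$. For $n\ge2$, $M_n$ denotes the maximum of $l_1$ over all impossibly burnable $n$-path forests. *)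

(* Defs.v *)
From Stdlib Require Import Reals.
From mathcomp Require Import all_boot.

(* Admissible burning values: t positive, t = l (mod 2), l <= 2mt - t^2
   (the last stated without truncated subtraction as l + t^2 <= 2mt). *)
Definition burn_ok (m l t : nat) : bool :=
  [&& 0 < t, odd t == odd l & l + t ^ 2 <= 2 * m * t].

(* For 1 <= l <= m^2 such a t
   exists and is <= m+1, so searching t in [0, 2m+2) finds the least one;
   find returns the index, which equals t since the list is iota 0 _. *)
Definition Bm (m l : nat) : nat := find (burn_ok m l) (iota 0 (2 * m + 2)).

(* An n-path forest of order m^2, represented by the sorted list
   (l_1 <= ... <= l_n) of its (positive) path orders. *)
Definition path_forest (n m : nat) (l : seq nat) : Prop :=
  [/\ size l = n, sorted leq l, all (fun x => 0 < x) l & sumn l = m ^ 2].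

Definition impossibly_burnable (n m : nat) (l : seq nat) : Prop :=
  path_forest n m l /\ m < sumn (map (Bm m) l).

Definition is_Mn (n x : nat) : Prop :=
  (exists m l, impossibly_burnable n m l /\ head 0%N l = x) /\
  (forall m l, impossibly_burnable n m l -> head 0%N l <= x).

Section Bound.
Local Open Scope R_scope.
Definition l1_bound (n x : nat) : Prop :=
  INR x <= 12 * INR n - 2 * sqrt (30 * INR n - 27) - 8.
End Bound.

(* Main.v *)
Require Import Defs.
From Stdlib Require Import Reals ZArith Lia Lra Psatz.
From mathcomp Require Import zify.
From mathcomp Require Import all_boot.

Lemma Bm_ge m l t : t <= 2*m+2 -> (forall s, s < t -> ~~ burn_ok m l s) -> t <= Bm m l.
Proof.
move=> Ht Hs; rewrite /Bm.
case: (ltnP (find (burn_ok m l) (iota 0 (2*m+2))) t) => // Hk.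
have Hh : has (burn_ok m l) (iota 0 (2*m+2)) by rewrite has_find size_iota; lia.
have := nth_find 0 Hh.
have Hk2 : find (burn_ok m l) (iota 0 (2 * m + 2)) < 2*m+2 by move: Hh; rewrite has_find size_iota.
rewrite nth_iota // add0n => H.
by move: (Hs _ Hk); rewrite H.
Qed.

Lemma burn_ok_witness m l : 1 <= m -> 1 <= l <= m^2 ->
  burn_ok m l (if odd m == odd l then m else m.+1).
Proof.
move=> Hm Hl; rewrite /burn_ok.
case E: (odd m == odd l).
- apply/and3P; split; [lia | by [] | nia].
- have Hne : l != m^2.
    by apply/eqP => El; move: E; rewrite El oddX /= eqxx.
  apply/and3P; split => //.
  + by move: E; rewrite oddS; case: (odd m); case: (odd l).
  + nia.
Qed.

Lemma Bm_spec m l : 1 <= m -> 1 <= l <= m^2 ->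
  [/\ burn_ok m l (Bm m l), Bm m l <= m+1 &
      forall s, s < Bm m l -> ~~ burn_ok m l s].
Proof.
move=> Hm Hl.
set w := (if odd m == odd l then m else m.+1).
have Hw := burn_ok_witness m l Hm Hl.
have Hwle : w <= m+1 by rewrite /w; case: ifP => _; lia.
have Hh : has (burn_ok m l) (iota 0 (2*m+2)).
  by apply/hasP; exists w => //; rewrite mem_iota; lia.
have Hk2 : Bm m l < 2*m+2 by move: Hh; rewrite has_find size_iota.
split.
- by have := nth_find 0 Hh; rewrite nth_iota // add0n.
- case: (leqP (Bm m l) w) => Hc; first lia.
  by have := before_find 0 Hc; rewrite nth_iota ?add0n ?Hw //; lia.
- move=> s Hs; have := before_find 0 Hs; rewrite nth_iota ?add0n; last lia.
  by move=> ->.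
Qed.

Lemma Bm_facts m l : 1 <= m -> 1 <= l <= m^2 ->
  [/\ 1 <= Bm m l, Bm m l <= m+1, odd (Bm m l) = odd l &
     (4 <= Bm m l -> 2*m*(Bm m l - 2) + 2 <= l + (Bm m l - 2)^2)].
Proof.
move=> Hm Hl; have [Hok Hle Hmin] := Bm_spec m l Hm Hl.
move: Hok; rewrite /burn_ok => /and3P [H0 /eqP Hodd H2].
split => // H4.
have Hs : Bm m l - 2 < Bm m l by lia.
have := Hmin _ Hs; rewrite /burn_ok.
have Hodd2 : odd (Bm m l - 2) = odd l.
  by rewrite oddB ?Hodd //; lia.
rewrite Hodd2 eqxx.
have -> : 0 < Bm m l - 2 by lia.
rewrite /= -ltnNge => Hlt.
set s := Bm m l - 2 in Hlt Hodd2 *.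
have Hev : ~~ odd (l + s^2) by rewrite oddD oddX /= Hodd2 addbb.
have Hne : l + s^2 != (m*s).*2.+1.
  by apply/eqP => E; move: Hev; rewrite E /= odd_double.
have : (m * s).*2.+1 = 2*m*s + 1 by rewrite -mul2n mulnA; lia.
lia.
Qed.

Lemma inr_cons (a : nat) l y : y \in l -> y \in a :: l.
Proof. by rewrite inE => ->; rewrite orbT. Qed.
Arguments inr_cons a {l y}.

Definition sZ (f : nat -> Z) (l : seq nat) : Z := foldr (fun y acc => (f y + acc)%Z) 0%Z l.

Lemma sZ_le f g l : (forall y, y \in l -> (f y <= g y)%Z) -> (sZ f l <= sZ g l)%Z.
Proof.
elim: l => [|a l IH] H /=; first lia.
have := H a (mem_head _ _); have := IH (fun y Hy => H y (inr_cons a Hy)); lia.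
Qed.

Lemma sZ_lt f g l y0 : (forall y, y \in l -> (f y <= g y)%Z) -> y0 \in l -> (f y0 < g y0)%Z ->
  (sZ f l < sZ g l)%Z.
Proof.
elim: l => [|a l IH] H //= Hy0 Hlt.
have Ha := H a (mem_head _ _).
have Hl : forall y, y \in l -> (f y <= g y)%Z by move=> y Hy; apply: H; exact: inr_cons.
move: Hy0; rewrite inE => /orP [/eqP E|Hy0].
- subst; have := sZ_le f g l Hl; lia.
- have := IH Hl Hy0 Hlt; lia.
Qed.

Lemma sZ_lin (a b : Z) f g l :
  sZ (fun y => a * f y + b + g y)%Z l = (a * sZ f l + b * Z.of_nat (size l) + sZ g l)%Z.
Proof. elim: l => [|c l IH] /=; first lia. rewrite IH. nia. Qed.

Lemma sZ_nat l : sZ (fun y => Z.of_nat y) l = Z.of_nat (sumn l).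
Proof. elim: l => [|c l IH] //=; rewrite IH; lia. Qed.

Lemma sZ_map (g : nat -> nat) l : sZ (fun y => Z.of_nat (g y)) l = Z.of_nat (sumn (map g l)).
Proof. elim: l => [|c l IH] //=; rewrite IH; lia. Qed.

Lemma sZ0 l : sZ (fun _ => 0%Z) l = 0%Z.
Proof. by elim: l => //= ? ? ->. Qed.

Lemma sZ_ge_elem f l y : (forall z, z \in l -> (0 <= f z)%Z) -> y \in l -> (f y <= sZ f l)%Z.
Proof.
elim: l => [|a l IH] H //=; rewrite inE => /orP [/eqP E|Hy].
- subst; have : (0 <= sZ f l)%Z.
    have := sZ_le (fun _ => 0%Z) f l (fun z Hz => H z (inr_cons a Hz)).
    by rewrite sZ0.
  lia.
- have := H a (mem_head _ _); have := IH (fun z Hz => H z (inr_cons a Hz)) Hy; lia.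
Qed.

Lemma sZ_quad e c K l : (forall y, y \in l -> (0 <= e y /\ e y * (K - e y) <= c y)%Z) ->
  (sZ e l * (K - sZ e l) <= sZ c l)%Z /\ (0 <= sZ e l)%Z.
Proof.
elim: l => [|a l IH] H /=; first lia.
have [Ha1 Ha2] := H a (mem_head _ _).
have [IH1 IH2] := IH (fun z Hz => H z (inr_cons a Hz)).
split; last lia.
have : (0 <= e a * sZ e l)%Z by apply: Z.mul_nonneg_nonneg.
nia.
Qed.

Lemma odd_sumn_map (g : nat -> nat) l : (forall y, y \in l -> odd (g y) = odd y) ->
  odd (sumn (map g l)) = odd (sumn l).
Proof.
elim: l => [|a l IH] H //=.
by rewrite !oddD H ?mem_head // IH // => y Hy; apply: H; exact: inr_cons.
Qed.

Lemma elem_le_sumn l y : y \in l -> y <= sumn l.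
Proof.
elim: l => [|a l IH] //=; rewrite inE => /orP [/eqP ->|Hy]; first lia.
have := IH Hy; lia.
Qed.

Lemma head_le l y : sorted leq l -> y \in l -> head 0 l <= y.
Proof.
case: l => [|a l] //= Hs; rewrite inE => /orP [/eqP ->//|Hy].
have := order_path_min leq_trans Hs => /allP /(_ y Hy); done.
Qed.

Local Open Scope Z_scope.
Lemma alg (n m x Q E C T : Z): 1 <= Q <= n -> 0 <= x -> 1 <= m -> 0 <= E <= m*(n-Q) ->
  T >= m+2 -> T <= 3*Q + 4*(n-Q) + E - 1 -> m^2 >= Q*x + (n-Q)*(4*m-2) + C ->
  C >= E*(m-1) -> C >= E*(2*m-4-E) -> Q*x <= 12*n*Q - 8*Q - 3*Q^2 - 10*n + 9.
Proof.
intros HQ Hx Hm HE HT1 HT2 HL HC1 HC2.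
assert (Hgoal: 12*n*Q - 8*Q - 3*Q^2 - 10*n + 9 = (3*Q+4*(n-Q)-3)^2 - (n-Q)*(4*(3*Q+4*(n-Q)-3)-2)) by ring.
rewrite Hgoal.
set (p := n - Q) in *. set (M0 := 3*Q+4*p-3) in *.
assert (HL2 : Q*x <= m^2 - 4*p*m + 2*p - C) by (assert (p*(4*m-2) = 4*p*m - 2*p) by ring; lia).
destruct (Z_le_gt_dec m M0) as [HD|HD].
- assert (C >= 0) by (assert (0 <= E*(m-1)) by (apply Z.mul_nonneg_nonneg; lia); lia).
  assert ((M0 - m)*(M0 + m - 4*p) >= 0) by (apply Z.le_ge, Z.mul_nonneg_nonneg; unfold M0 in *; lia).
  assert ((M0 - m)*(M0 + m - 4*p) = M0^2 - 4*p*M0 - (m^2 - 4*p*m)) by ring.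
  lia.
- set (D := m - M0) in *.
  assert (HDE: D <= E) by (unfold D, M0 in *; lia).
  assert (Hp: p >= 1).
  { destruct (Z_le_gt_dec p 0); [|lia]. assert (m*p <= 0) by (apply Z.mul_nonneg_nonpos; lia). lia. }
  assert (HC3: C >= D*(2*m-4-D)).
  { destruct (Z_le_gt_dec (E+D) (2*m-4)).
    - assert ((E-D)*(2*m-4-E-D) >= 0) by (apply Z.le_ge, Z.mul_nonneg_nonneg; lia).
      assert (E*(2*m-4-E) - D*(2*m-4-D) = (E-D)*(2*m-4-E-D)) by ring. lia.
    - assert (E >= m-1) by lia.
      assert ((m-2)^2 - D*(2*m-4-D) = (m-2-D)^2) by ring.
      assert ((m-2-D)^2 >= 0) by (apply Z.le_ge, Z.pow_even_nonneg; exists 1; lia).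
      assert (E*(m-1) >= (m-1)*(m-1)) by (apply Z.le_ge, Z.mul_le_mono_nonneg_r; lia).
      assert ((m-1)*(m-1) - (m-2)^2 = 2*m - 3) by ring.
      lia. }
  assert (D*(2*m-4-D) - D*(2*m-D-4*p) = D*(4*p-4)) by ring.
  assert (D*(4*p-4) >= 0) by (apply Z.le_ge, Z.mul_nonneg_nonneg; lia).
  assert (m^2 - 4*p*m - (M0^2 - 4*p*M0) = D*(2*m-D-4*p)) by (unfold D; ring).
  lia.
Qed.
Local Close Scope Z_scope.

Lemma part1_int n m l : 3 <= n -> impossibly_burnable n m l ->
  (exists2 i, i < n & Bm m (nth 0 l i) <= 2) ->
  exists Q : Z, (1 <= Q <= Z.of_nat n)%Z /\
    (Q * Z.of_nat (head 0%N l) <= 12 * Z.of_nat n * Q - 8 * Q - 3 * Q^2 - 10 * Z.of_nat n + 9)%Z.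
Proof.
move=> Hn [[Hsz Hsort Hpos Hsum] HB] [i Hi Hj].
set x := head 0 l.
have Hx : forall y, y \in l -> x <= y := fun y Hy => head_le l y Hsort Hy.
have Hp : forall y, y \in l -> 0 < y := fun y Hy => allP Hpos y Hy.
have Hle : forall y, y \in l -> y <= m^2 by move=> y Hy; rewrite -Hsum; apply: elem_le_sumn.
have Hjin : nth 0 l i \in l by rewrite mem_nth // Hsz.
have Hm : 1 <= m.
  have H1 := Hp _ Hjin; have H2 := Hle _ Hjin; case: (posnP m) => Hm0 //; rewrite Hm0 in H2; lia.
have Hf : forall y, y \in l -> [/\ 1 <= Bm m y, Bm m y <= m+1, odd (Bm m y) = odd y &
     (4 <= Bm m y -> 2*m*(Bm m y - 2) + 2 <= y + (Bm m y - 2)^2)].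
  by move=> y Hy; apply: Bm_facts => //; rewrite Hp ?Hle.
pose qq y := if Bm m y <= 3 then 1%Z else 0%Z.
pose ee y := if Bm m y <= 3 then 0%Z else (Z.of_nat (Bm m y) - 4)%Z.
pose cc y := if Bm m y <= 3 then 0%Z else (Z.of_nat y - (4 * Z.of_nat m - 2))%Z.
have E1 := sZ_le (fun y => ((Z.of_nat x) - (4*(Z.of_nat m)-2)) * qq y + (4*(Z.of_nat m)-2) + cc y)%Z (fun y => Z.of_nat y) l.
rewrite sZ_lin sZ_nat Hsum Hsz in E1.
have {}E1 := E1 (fun y Hy => ltac:(have := Hx y Hy; rewrite /qq /cc; case: ifP => _; lia)).
have E2 := sZ_lt (fun y => Z.of_nat (Bm m y)) (fun y => (-1) * qq y + 4 + ee y)%Z l (nth 0 l i).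
rewrite sZ_lin sZ_map Hsz in E2.
have {}E2 := E2 (fun y Hy => ltac:(rewrite /qq /ee; case: ifP => Ht; lia)) Hjin
   ltac:(rewrite /qq /ee; case: ifP => Ht; lia).
have E3 := sZ_le (fun y => ((Z.of_nat m)-1) * ee y + 0 + (fun _ => 0%Z) y)%Z cc l.
rewrite sZ_lin sZ0 in E3.
have {}E3 := E3 (fun y Hy => ltac:(have [? ? ? H4] := Hf y Hy; rewrite /ee /cc; case: ifP => Ht;
  [lia | have {}H4 := H4 ltac:(lia); nia])).
have [E4 E5] := sZ_quad ee cc (2*(Z.of_nat m)-4)%Z l (fun y Hy => ltac:(have [? ? ? H4] := Hf y Hy;
   rewrite /ee /cc; case: ifP => Ht; [lia | have {}H4 := H4 ltac:(lia); nia])).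
have E6 := sZ_le ee (fun y => (-(Z.of_nat m)) * qq y + (Z.of_nat m) + (fun _ => 0%Z) y)%Z l.
rewrite sZ_lin sZ0 Hsz in E6.
have {}E6 := E6 (fun y Hy => ltac:(have [? ? ? ?] := Hf y Hy; rewrite /ee /qq; case: ifP => Ht; lia)).
have E7 := sZ_le qq (fun y => 0 * qq y + 1 + (fun _ => 0%Z) y)%Z l.
rewrite sZ_lin sZ0 Hsz in E7.
have {}E7 := E7 (fun y Hy => ltac:(rewrite /qq; case: ifP => Ht; lia)).
have E8 := sZ_ge_elem qq l (nth 0 l i) (fun y Hy => ltac:(rewrite /qq; case: ifP => Ht; lia)) Hjin.
have E9 : qq (nth 0 l i) = 1%Z by rewrite /qq; case: ifP => Ht; lia.
have HT : m + 2 <= sumn (map (Bm m) l).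
  have Hod := odd_sumn_map (Bm m) l (fun y Hy => ltac:(by have [? ? ? ?] := Hf y Hy)).
  rewrite Hsum oddX /= in Hod.
  have Hne : sumn (map (Bm m) l) != m.+1 by apply/eqP => E; move: Hod; rewrite E /=; case: (odd m).
  lia.
exists (sZ qq l); split; first lia.
apply: (alg (Z.of_nat n) (Z.of_nat m) (Z.of_nat x) (sZ qq l) (sZ ee l) (sZ cc l) (Z.of_nat (sumn (map (Bm m) l)))); try lia.
Qed.

Section RB.
Local Open Scope R_scope.
Lemma int_to_bound (n x : nat) (Q : Z) : (3 <= n)%nat -> (1 <= Q)%Z ->
  (Q * Z.of_nat x <= 12 * Z.of_nat n * Q - 8 * Q - 3 * Q^2 - 10 * Z.of_nat n + 9)%Z ->
  l1_bound n x.
Proof.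
move=> Hn HQ H.
set N := Z.of_nat n in H. set Xz := Z.of_nat x in H.
have Hy1 : (Q * (12*N - 8 - Xz) >= 3*Q^2 + 10*N - 9)%Z by lia.
have HN : (N >= 3)%Z by rewrite /N; lia.
have Hy0 : (12*N - 8 - Xz >= 1)%Z.
  case: (Z_le_gt_dec (12*N - 8 - Xz) 0) => Hc; last lia.
  have : (Q * (12*N - 8 - Xz) <= 0)%Z by apply: Z.mul_nonneg_nonpos; lia.
  have : (0 <= Q^2)%Z by nia. lia.
set Y := (12*N - 8 - Xz)%Z in Hy1 Hy0.
have Hsq : (Y*Y >= 120*N - 108)%Z.
  have A : ((Q*Y)*(Q*Y) >= (3*Q^2 + 10*N - 9)*(3*Q^2 + 10*N - 9))%Z.
    apply: Z.le_ge; apply: Z.mul_le_mono_nonneg; nia.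
  have B : ((3*Q^2 + 10*N - 9)*(3*Q^2 + 10*N - 9) - 12*Q^2*(10*N-9) = (3*Q^2 - (10*N-9))^2)%Z by ring.
  have C : (0 <= (3*Q^2 - (10*N-9))^2)%Z by apply: Z.pow_even_nonneg; exists 1%Z; lia.
  have D : ((Q*Y)*(Q*Y) = Q^2 * (Y*Y))%Z by ring.
  have Q2 : (1 <= Q^2)%Z by nia.
  nia.
rewrite /l1_bound.
have RY0 : (1 <= IZR Y) by apply: IZR_le; lia.
have RY : IZR Y = (12 * INR n - 8 - INR x).
  rewrite /Y /N /Xz !minus_IZR mult_IZR -!INR_IZR_INZ. by [].
have RS : (IZR (Y*Y) >= 120 * INR n - 108).
  have := IZR_le _ _ (Z.ge_le _ _ Hsq). rewrite minus_IZR mult_IZR -INR_IZR_INZ. lra.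
rewrite mult_IZR RY in RS.
have Hnr : 3 <= INR n by have := le_INR 3%nat n ltac:(apply/leP; lia); rewrite /=; lra.
have Hs0 := sqrt_pos (30 * INR n - 27).
have Hss := sqrt_sqrt (30 * INR n - 27) ltac:(lra).
nra.
Qed.
End RB.

Lemma path_nseq x b F : x <= F -> path leq x (nseq b F).
Proof. elim: b x => [|b IH] x Hx //=; rewrite Hx /=; exact: IH. Qed.

Lemma path_blocks k y z b F : y <= z -> z <= F -> path leq y (nseq k y ++ z :: nseq b F).
Proof.
move=> H1 H2; elim: k => [|k IH] /=; first by rewrite H1 path_nseq.
by rewrite leqnn.
Qed.

Lemma B_odd3 m y : 1 <= m -> odd y -> 2*m <= y -> 3 <= Bm m y.
Proof.
move=> Hm Ho Hy; apply: Bm_ge; first lia.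
move=> s; case: s => [|[|[|s]]] //= _; rewrite /burn_ok.
- by apply/negP => /and3P [_ _ H]; lia.
- by rewrite Ho.
Qed.

Lemma B_even4 m F : 1 <= m -> F = 4*m - 2 -> 4 <= Bm m F.
Proof.
move=> Hm HF.
have Ho : odd F = false by rewrite HF; lia.
apply: Bm_ge; first lia.
move=> s; case: s => [|[|[|[|s]]]] //= _; rewrite /burn_ok ?Ho //.
by apply/negP => /and3P [_ _ H]; lia.
Qed.

Lemma sumB m k y z b F :
  sumn (map (Bm m) (nseq k y ++ z :: nseq b F)) = Bm m y * k + Bm m z + Bm m F * b.
Proof. by rewrite map_cat /= map_nseq sumn_cat /= map_nseq !sumn_nseq; lia. Qed.

Section QP.
Local Open Scope Z_scope.
Lemma Qpart (Za Zb Wz yz Q : Z) :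
  (Za * yz >= 2 * Wz - Za + 2) ->
  (2 * Wz = 9 * (Za * (Za - 1)) + 12 * Za * Zb + 4 - 4 * Za - 6 * Zb) ->
  (Za * Za <= 2 * (Za + Zb)) -> (2 * (Za + Zb) < (Za + 1) * (Za + 1)) -> (4 <= Za) ->
  (1 <= Q) ->
  (12 * (Za + Zb) * Q - 8 * Q - 3 * Q ^ 2 - 10 * (Za + Zb) + 9 < Q * yz).
Proof.
intros Hay ZW' Hsq Hsq2 Za4 HQ.
assert (Q2 : Q^2 = Q * Q) by ring. rewrite Q2; clear Q2.
remember (Za * Za) as A2 eqn:HA2.
assert (Hsq2' : 2 * (Za + Zb) < A2 + 2 * Za + 1) by (rewrite HA2; lia).
assert (ZW2 : 2 * Wz = 9 * A2 - 9 * Za + 12 * Za * Zb + 4 - 4 * Za - 6 * Zb) by (rewrite HA2; lia).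
remember (3 * A2 + 6 * (Za + Zb) - 6) as Bq eqn:HBq.
remember (3 * Za * (Q * Q) - Bq * Q + Za * (10 * (Za + Zb) - 9)) as K eqn:HK.
assert (HKid : Q * (2 * Wz - Za + 2) - Za * (12 * (Za + Zb) * Q - 8 * Q - 3 * (Q * Q) - 10 * (Za + Zb) + 9) = K).
{ rewrite HK HBq. assert (Q * (2 * Wz) = Q * (9 * A2 - 9 * Za + 12 * Za * Zb + 4 - 4 * Za - 6 * Zb)) by (rewrite ZW2; ring).
  subst A2. nia. }
assert (A4 : 4 * Za <= A2) by (rewrite HA2; apply Z.mul_le_mono_nonneg_r; lia).
assert (Z2 : 16 <= A2) by lia.
assert (HB0 : 0 <= Bq) by lia.
assert (HBU : Bq <= 6 * A2 + 6 * Za - 6) by lia.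
assert (HB2 : Bq * Bq <= (6 * A2 + 6 * Za - 6) * (6 * A2 + 6 * Za - 6))
  by (apply Z.mul_le_mono_nonneg; lia).
assert (Hpos1 : 12 * A2 * (5 * A2 - 9) <= 12 * A2 * (10 * (Za + Zb) - 9))
  by (apply Z.mul_le_mono_nonneg_l; lia).
assert (E3 : 1 <= A2 - 3 * Za - 3) by lia.
assert (E4 : 0 <= A2 * (A2 - 3 * Za - 3 - 1)) by (apply Z.mul_nonneg_nonneg; lia).
assert (Hpos2 : 0 < 12 * A2 * (5 * A2 - 9) - (6 * A2 + 6 * Za - 6) * (6 * A2 + 6 * Za - 6)).
{ assert (E : 12 * A2 * (5 * A2 - 9) - (6 * A2 + 6 * Za - 6) * (6 * A2 + 6 * Za - 6)
     = 24 * (A2 * (A2 - 3 * Za - 3 - 1)) + 24 * A2 + 72 * Za - 36) by (rewrite HA2; ring).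
  lia. }
assert (HK12 : 12 * Za * K = (6 * Za * Q - Bq)^2 + (12 * A2 * (10 * (Za + Zb) - 9) - Bq * Bq))
  by (rewrite HK HA2; ring).
assert (S0 : 0 <= (6 * Za * Q - Bq)^2) by (apply Z.pow_even_nonneg; exists 1; lia).
assert (HKpos : 0 < K).
{ assert (0 < 12 * Za * K) by lia.
  destruct (Z_le_gt_dec K 0) as [HK0|HK0]; [|lia].
  assert (12 * Za * K <= 0) by (apply Z.mul_nonneg_nonpos; lia). lia. }
assert (HQy : Q * (2 * Wz - Za + 2) <= Q * (Za * yz)) by (apply Z.mul_le_mono_nonneg_l; lia).
assert (H : Za * (12 * (Za + Zb) * Q - 8 * Q - 3 * (Q * Q) - 10 * (Za + Zb) + 9) < Za * (Q * yz)).
{ assert (Q * (Za * yz) = Za * (Q * yz)) by ring. lia. }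
apply Z.mul_lt_mono_pos_l in H; lia.
Qed.
End QP.

Lemma witness_gen n : 8 <= n -> exists m w, impossibly_burnable n m w /\
  forall Q : Z, (1 <= Q <= Z.of_nat n)%Z ->
    (12 * Z.of_nat n * Q - 8 * Q - 3 * Q^2 - 10 * Z.of_nat n + 9 < Q * Z.of_nat (head 0%N w))%Z.
Proof.
move=> Hn.
set a := Nat.sqrt (2*n).
have [Ha1 Ha2] : a * a <= 2*n /\ 2*n < a.+1 * a.+1.
  by have [/leP H1 /leP H2] := Nat.sqrt_spec (2*n) (Nat.le_0_l _).
have Ha4 : 4 <= a.
  case: (leqP 4 a) => // Hlt; have : a.+1 <= 4 by lia. nia.
have Han : 2 * a <= n by nia.
set b := n - a.
have Hb : 1 <= b by lia.
set m := 3*a + 4*b - 2.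
set F := 4*m - 2.
set h := (a * a.-1)./2.
have Hh : 2 * h = a * (a - 1).
  have Hev : odd (a * a.-1) = false.
    by rewrite oddM; case: a Ha4 {Ha1 Ha2 Han b Hb m F h} => [|a'] //= _; case: (odd a').
  have := odd_double_half (a * a.-1); rewrite Hev /= -mul2n => E; rewrite /h; lia.
set W := 9*h + 6*a*b + 2 - 2*a - 3*b.
have Hab : 2*a + 3*b <= 6*a*b.
  have : 2 * a + 3 * b <= 4 * a * b + 3 * a * b by nia.
  nia.
have HW : W + 2*a + 3*b = 9*h + 6*a*b + 2 by rewrite /W; lia.
set w := W %/ a. set r := W %% a.
have Hwr : W = w * a + r by rewrite /w /r; exact: divn_eq.
have Hr : r < a by rewrite /r ltn_pmod //; lia.
set y := 2*w+1. set z := 2*(w+r)+1.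
have Zm : Z.of_nat m = (3 * Z.of_nat a + 4 * Z.of_nat b - 2)%Z by rewrite /m; lia.
have ZF : Z.of_nat F = (4 * Z.of_nat m - 2)%Z by rewrite /F; lia.
have Zh : (2 * Z.of_nat h = Z.of_nat a * (Z.of_nat a - 1))%Z.
  have : (Z.of_nat (a * (a - 1)) = Z.of_nat a * (Z.of_nat a - 1))%Z by lia.
  lia.
have ZW : (2 * Z.of_nat W = 9 * (Z.of_nat a * (Z.of_nat a - 1)) + 12 * Z.of_nat a * Z.of_nat b + 4
     - 4 * Z.of_nat a - 6 * Z.of_nat b)%Z.
  have : (Z.of_nat (6 * a * b) = 6 * Z.of_nat a * Z.of_nat b)%Z by lia.
  lia.
have Zwr : (Z.of_nat W = Z.of_nat w * Z.of_nat a + Z.of_nat r)%Z by rewrite Hwr; lia.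
have Hid : m^2 = b*F + a + 2*W.
  have E : (Z.of_nat m * Z.of_nat m = Z.of_nat b * Z.of_nat F + Z.of_nat a + 2 * Z.of_nat W)%Z.
    rewrite ZW ZF Zm; ring.
  rewrite expnS expn1; lia.
have Hy2m : 2*m <= y.
  have Hma : m * a <= w * a.
    have P1 : (0 <= (4 * Z.of_nat a - 6) * Z.of_nat b)%Z by apply: Z.mul_nonneg_nonneg; lia.
    have P2 : (0 <= (Z.of_nat a - 4) * (3 * Z.of_nat a + 1))%Z by apply: Z.mul_nonneg_nonneg; lia.
    have : (Z.of_nat m * Z.of_nat a + Z.of_nat a <= Z.of_nat W + 1)%Z.
      have : (2 * (Z.of_nat W + 1) - 2 * (Z.of_nat m * Z.of_nat a + Z.of_nat a) =
              (4 * Z.of_nat a - 6) * Z.of_nat b + (Z.of_nat a - 4) * (3 * Z.of_nat a + 1) + 10)%Z.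
        rewrite Zm; lia.
      lia.
    have : (Z.of_nat (m * a) = Z.of_nat m * Z.of_nat a)%Z by lia.
    have : (Z.of_nat (w * a) = Z.of_nat w * Z.of_nat a)%Z by lia.
    lia.
  have : m <= w by rewrite -(leq_pmul2r (_ : 0 < a)) //; lia.
  rewrite /y; lia.
have HzF : z <= F.
  have : z * a <= F * a.
    have P1 : (0 <= Z.of_nat r * (Z.of_nat a - 1))%Z by apply: Z.mul_nonneg_nonneg; lia.
    have P2 : (Z.of_nat r * (Z.of_nat a - 1) <= (Z.of_nat a - 1) * (Z.of_nat a - 1))%Z
      by apply: Z.mul_le_mono_nonneg_r; lia.
    have P3 : (0 <= Z.of_nat a * Z.of_nat b)%Z by apply: Z.mul_nonneg_nonneg; lia.
    have : (Z.of_nat (z * a) = (2 * (Z.of_nat w + Z.of_nat r) + 1) * Z.of_nat a)%Z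
      by rewrite /z; lia.
    have : (Z.of_nat (F * a) = Z.of_nat F * Z.of_nat a)%Z by lia.
    have : ((2 * (Z.of_nat w + Z.of_nat r) + 1) * Z.of_nat a =
            2 * Z.of_nat W + 2 * (Z.of_nat r * (Z.of_nat a - 1)) + Z.of_nat a)%Z
      by rewrite Zwr; ring.
    have : (Z.of_nat F * Z.of_nat a - (2 * Z.of_nat W + 2 * ((Z.of_nat a - 1) * (Z.of_nat a - 1)) + Z.of_nat a)
       = Z.of_nat a * Z.of_nat a + 4 * (Z.of_nat a * Z.of_nat b) + 6 * Z.of_nat a + 6 * Z.of_nat b - 6)%Z
      by rewrite ZF ZW Zm; ring.
    lia.
  by rewrite leq_pmul2r //; lia.
have Hyz : y <= z by rewrite /y /z; lia.
exists m, (nseq a.-1 y ++ z :: nseq b F); split.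
- split; [split|].
  + by rewrite size_cat /= !size_nseq; lia.
  + have -> : a.-1 = (a-2).+1 by lia.
    by rewrite /= path_blocks.
  + rewrite all_cat /= !all_nseq.
    have -> : 0 < y by rewrite /y; lia.
    have -> : 0 < z by rewrite /z; lia.
    have -> : 0 < F by rewrite /F; lia.
    by rewrite !orbT.
  + rewrite sumn_cat /= !sumn_nseq Hid /y /z.
    have E1 : (Z.of_nat ((2 * w + 1) * a.-1) = (2 * Z.of_nat w + 1) * (Z.of_nat a - 1))%Z by lia.
    have E2 : ((2 * Z.of_nat w + 1) * (Z.of_nat a - 1) = 2 * (Z.of_nat w * Z.of_nat a) + Z.of_nat a - 2 * Z.of_nat w - 1)%Z by ring.
    lia.
  + rewrite sumB.
    have H1 : 1 <= m by lia.
    have := B_odd3 m y H1 ltac:(by rewrite /y; lia) Hy2m.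
    have := B_odd3 m z H1 ltac:(by rewrite /z; lia) ltac:(lia).
    have := B_even4 m F H1 erefl.
    move=> HF Hz Hy.
    have : 3 * a.-1 <= Bm m y * a.-1 by rewrite leq_mul2r Hy orbT.
    have : 4 * b <= Bm m F * b by rewrite leq_mul2r HF orbT.
    lia.
- move=> Q HQ.
  have -> : head 0%N (nseq a.-1 y ++ z :: nseq b F) = y.
    by have -> : a.-1 = (a-2).+1 by lia.
  set Za := Z.of_nat a. set Zb := Z.of_nat b.
  have Zn : Z.of_nat n = (Za + Zb)%Z by rewrite /Za /Zb /b; lia.
  rewrite Zn.
  have Hay : (Za * Z.of_nat y >= 2 * Z.of_nat W - Za + 2)%Z.
    have : (Za * Z.of_nat y = 2 * (Z.of_nat w * Za) + Za)%Z by rewrite /y /Za; lia.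
    rewrite /Za; lia.
  have ZW' : (2 * Z.of_nat W = 9 * (Za * (Za - 1)) + 12 * Za * Zb + 4 - 4 * Za - 6 * Zb)%Z by exact: ZW.
  have Hsq : (Za * Za <= 2 * (Za + Zb))%Z by rewrite -Zn /Za; lia.
  have Hsq2 : (2 * (Za + Zb) < (Za + 1) * (Za + 1))%Z by rewrite -Zn /Za; lia.
  have Za4 : (4 <= Za)%Z by rewrite /Za; lia.
  exact: (Qpart Za Zb (Z.of_nat W) (Z.of_nat y) Q Hay ZW' Hsq Hsq2 Za4 (proj1 HQ)).
Qed.

Ltac small_case m w :=
  exists m, w; split;
  [ split; [split; vm_compute; reflexivity | vm_compute; reflexivity]
  | intros Q HQ; cbn [head];
    assert (Hq : (Q = 1 \/ Q = 2 \/ Q = 3 \/ Q = 4 \/ Q = 5 \/ Q = 6 \/ Q = 7)%Z) by lia;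
    case: Hq => [E|[E|[E|[E|[E|[E|E]]]]]]; subst Q; lia ].

Lemma witness_small n : 3 <= n <= 7 -> exists m w, impossibly_burnable n m w /\
  forall Q : Z, (1 <= Q <= Z.of_nat n)%Z ->
    (12 * Z.of_nat n * Q - 8 * Q - 3 * Q^2 - 10 * Z.of_nat n + 9 < Q * Z.of_nat (head 0%N w))%Z.
Proof.
case: n => [|[|[|[|[|[|[|[|n]]]]]]]] Hn; try (exfalso; lia).
- small_case 8 [:: 17; 17; 30].
- small_case 12 [:: 25; 27; 46; 46].
- small_case 16 [:: 35; 35; 62; 62; 62].
- small_case 20 [:: 43; 45; 78; 78; 78; 78].
- small_case 24 [:: 53; 53; 94; 94; 94; 94; 94].
Qed.

Theorem mainTheorem4 (n m : nat) (l : seq nat) :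
  3 <= n ->
  impossibly_burnable n m l ->
  ((exists2 i, i < n & Bm m (nth 0%N l i) <= 2) ->
     l1_bound n (head 0%N l))
  /\
  (is_Mn n (head 0%N l) -> forall i, i < n -> 3 <= Bm m (nth 0%N l i)).
Proof.
move=> Hn Himp; split.
  move=> Hex; have [Q [HQ HQx]] := part1_int n m l Hn Himp Hex.
  exact: (int_to_bound n (head 0%N l) Q Hn (proj1 HQ) HQx).
move=> [_ Hmax] i Hi.
case: (leqP 3 (Bm m (nth 0%N l i))) => // Hlt; exfalso.
have Hex : exists2 i, i < n & Bm m (nth 0%N l i) <= 2 by exists i => //; lia.
have [Q [HQ HQx]] := part1_int n m l Hn Himp Hex.
have [m2 [w2 [Hw2 Hgt]]] : exists m w, impossibly_burnable n m w /\
  forall Q : Z, (1 <= Q <= Z.of_nat n)%Z ->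
    (12 * Z.of_nat n * Q - 8 * Q - 3 * Q^2 - 10 * Z.of_nat n + 9 < Q * Z.of_nat (head 0%N w))%Z.
  case: (leqP n 7) => Hn7; first by apply: witness_small; lia.
  by apply: witness_gen; lia.
have H1 := Hmax m2 w2 Hw2.
have H2 := Hgt Q HQ.
have H3 : (Q * Z.of_nat (head 0%N w2) <= Q * Z.of_nat (head 0%N l))%Z.
  apply: Z.mul_le_mono_nonneg_l; lia.
lia.
Qed.
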